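(* Let $S$ be a semigroup with finite $\mathcal{R}$-height, and let $B$ be a bi-ideal of $S$. Let $n$ be the maximum length of a chain of $\mathcal{R}$-classes of $S$ each of which intersects $B$. Then the $\mathcal{R}$-height of $B$ (regarded as a semigroup) satisfies $\mathrm{H}_{\mathcal{R}}(B)\leq 3n-1$.
   Context: For a semigroup $S$, $S^1$ denotes $S$ with an identity adjoined if necessary. Green's preorder on $S$: $a\leq_{\mathcal{R}} b$ iff $aS^1\subseteq bS^1$; $a\,\mathcal{R}\,b$ iff $a\leq_{\mathcal{R}} b$ and $b\leq_{\mathcal{R}} a$. The set of $\mathcal{R}$-classes is partially ordered by $R_a\leq R_b$ iff $a\leq_{\mathcal{R}} b$. The $\mathcal{R}$-height $\mathrm{H}_{\mathcal{R}}(S)$ is the supremum of the cardinalities (lengths) of chains in this poset. A bi-ideal of $S$ is a non-empty subset $B\subseteq S$ with $BS^1B\subseteq B$; in particular $B$ is a subsemigroup, and its $\mathcal{R}$-height is computed with respect to Green's relation $\mathcal{R}$ of the semigroup $B$ itself (i.e. $a\leq b$ in $B$ iff $aB^1\subseteq bB^1$). *)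

(* Defs.v *)
From Stdlib Require Import List Sorting.Sorted Arith.
Export ListNotations.

Record semigroup := Semigroup {
  carrier :> Type;
  mul : carrier -> carrier -> carrier;
  mulA : forall a b c, mul a (mul b c) = mul (mul a b) c
}.

Section Green.
Variable S : semigroup.

(* a P^1 : the set { a } ∪ { a s | s ∈ P }. With P = everything this is a S^1. *)
Definition rideal_in (P : S -> Prop) (a : S) : S -> Prop :=
  fun x => x = a \/ exists s, P s /\ x = mul S a s.

Definition leR_in (P : S -> Prop) (a b : S) : Prop :=
  forall x, rideal_in P a x -> rideal_in P b x.

Definition ltR_in (P : S -> Prop) (a b : S) : Prop :=
  leR_in P a b /\ ~ leR_in P b a.

Definition allS : S -> Prop := fun _ => True.

(* A chain of R-classes of the semigroup P, listed by representatives
   (all satisfying Q) in strictly decreasing order. A chain of k R-classes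
   (each meeting Q) corresponds exactly to such a list of length k. *)
Definition R_chain (P Q : S -> Prop) (l : list S) : Prop :=
  Sorted (fun x y => ltR_in P y x) l /\ Forall Q l.

(* H_R(P) <= m, for P a subsemigroup (Green's relation computed inside P). *)
Definition R_height_le (P : S -> Prop) (m : nat) : Prop :=
  forall l, R_chain P P l -> length l <= m.

Definition finite_R_height : Prop := exists m, R_height_le allS m.

(* bi-ideal: non-empty B with B S^1 B ⊆ B *)
Definition bi_ideal (B : S -> Prop) : Prop :=
  (exists b, B b) /\
  (forall b1 b2, B b1 -> B b2 -> B (mul S b1 b2)) /\
  (forall b1 s b2, B b1 -> B b2 -> B (mul S (mul S b1 s) b2)).

End Green.

(* Main.v *)
Require Import Defs.
From Stdlib Require Import List Arith Lia Classical Sorting.Sorted.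

Lemma ins_of_le (S:semigroup) (P : S -> Prop) a b : leR_in S P a b -> rideal_in S P b a.
Proof. intro H. apply H. left. reflexivity. Qed.

Lemma le_of_ins (S:semigroup) (P:S->Prop) a b :
  (forall x y, P x -> P y -> P (mul S x y)) -> rideal_in S P b a -> leR_in S P a b.
Proof.
  intros HP [->|[s [Hs ->]]] x [->|[t [Ht ->]]].
  - left; reflexivity.
  - right; exists t; auto.
  - right; exists s; auto.
  - right; exists (mul S s t); split; [auto| rewrite mulA; reflexivity].
Qed.

Lemma le_trans (S:semigroup) (P : S -> Prop) a b c :
  leR_in S P a b -> leR_in S P b c -> leR_in S P a c.
Proof. unfold leR_in; auto. Qed.

Lemma leB_leS (S:semigroup) (B : S -> Prop) a b :
  leR_in S B a b -> leR_in S (allS S) a b.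
Proof.
  intro H; apply le_of_ins; [intros; exact I|].
  destruct (ins_of_le _ _ _ _ H) as [->|[s [_ ->]]];
    [left; reflexivity| right; exists s; split; [exact I|reflexivity]].
Qed.

Lemma ltB_ex (S:semigroup) (B : S -> Prop) x y :
  ltR_in S B y x -> exists c, B c /\ y = mul S x c.
Proof.
  intros [H1 H2]. destruct (ins_of_le _ _ _ _ H1) as [->|[c [Hc ->]]].
  - exfalso; apply H2; intros z hz; exact hz.
  - eauto.
Qed.

Lemma core (S:semigroup) (B : S -> Prop) (hB : bi_ideal S B) x z c e :
  B c -> B e -> leR_in S (allS S) x (mul S z e) -> leR_in S B (mul S x c) z.
Proof.
  intros Hc He H. destruct hB as [_ [Hm Hbsb]]. apply le_of_ins; [exact Hm|]. right.
  destruct (ins_of_le _ _ _ _ H) as [->|[s [_ ->]]].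
  - exists (mul S e c); split; [auto| symmetry; apply mulA].
  - exists (mul S (mul S e s) c); split; [auto|]. rewrite !mulA; reflexivity.
Qed.

Lemma lt_le_trans (S:semigroup) (P : S -> Prop) b y x :
  ltR_in S P b y -> leR_in S P y x -> ltR_in S P b x.
Proof.
  intros [H3 H4] H2; split; [exact (le_trans _ _ _ _ _ H3 H2)|].
  intro H5; apply H4; exact (le_trans _ _ _ _ _ H2 H5).
Qed.

Definition minimalB (S:semigroup) (B : S -> Prop) z :=
  forall b, B b -> leR_in S (allS S) b z -> leR_in S (allS S) z b.

Lemma last_indep {A} (a:A) r x y : last (a::r) x = last (a::r) y.
Proof.
  revert a; induction r as [|b r IH]; intros a; [reflexivity| exact (IH b)].
Qed.

Lemma last_cons_ne {A} (y:A) r x : last (y::r) x = last r y.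
Proof. destruct r; simpl; [reflexivity| apply last_indep]. Qed.

Lemma chain_cons (S:semigroup) (B : S -> Prop) x y c :
  B x -> ltR_in S (allS S) y x -> R_chain S (allS S) B (y::c) ->
  R_chain S (allS S) B (x::y::c).
Proof.
  intros Hx Hlt [Hs Hf]; split; [constructor; [exact Hs| constructor; exact Hlt] | constructor; assumption].
Qed.

Lemma chain_one (S:semigroup) (B : S -> Prop) x : B x -> R_chain S (allS S) B [x].
Proof. intros Hx; split; [apply Sorted_cons; constructor | constructor; auto]. Qed.

Lemma chain_two (S:semigroup) (B : S -> Prop) x b :
  B x -> B b -> ltR_in S (allS S) b x -> R_chain S (allS S) B [x; b].
Proof.
  intros Hx Hb Hlt; split.
  - apply Sorted_cons; [apply Sorted_cons; constructor | constructor; exact Hlt].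
  - repeat constructor; auto.
Qed.

Lemma aux (S:semigroup) (B : S -> Prop) (hB : bi_ideal S B) : forall N l x,
  length l = N -> Sorted (fun a b => ltR_in S B b a) (x::l) -> Forall B (x::l) ->
  exists c', R_chain S (allS S) B (x::c') /\ length (x::l) <= 3 * length (x::c') /\
    (minimalB S B (last l x) -> Datatypes.S (length (x::l)) <= 3 * length (x::c')) /\
    (forall b, B b -> ltR_in S (allS S) b (last l x) -> R_chain S (allS S) B ((x::c') ++ [b])).
Proof.
  intros N. induction N as [N IH] using (well_founded_induction lt_wf).
  intros l x HN Hs Hf.
  pose proof hB as [_ [Hm Hbsb]].
  assert (Hx : B x) by (inversion Hf; assumption).
  destruct l as [|y r].
  - exists []. split; [apply chain_one; exact Hx|].
    split; [simpl; lia|]. split; [simpl; lia|]. intros b Hb Hlt. simpl in Hlt.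
    apply chain_two; auto.
  - apply Sorted_inv in Hs as [Hs1 Hhd]. apply HdRel_inv in Hhd.
    inversion Hf as [|? ? _ Hf1]; subst.
    assert (Hyx := leB_leS _ _ _ _ (proj1 Hhd)).
    assert (Hy : B y) by (inversion Hf1; assumption).
    destruct (classic (leR_in S (allS S) x y)) as [Hxy|Hnxy].
    + destruct r as [|z r'].
      * exists []. split; [apply chain_one; exact Hx|].
        split; [simpl; lia|]. split; [simpl; lia|]. intros b Hb Hlt. simpl in Hlt.
        apply chain_two; auto; exact (lt_le_trans _ _ _ _ _ Hlt Hyx).
      * apply Sorted_inv in Hs1 as [Hs2 Hhd2]. apply HdRel_inv in Hhd2.
        inversion Hf1 as [|? ? _ Hf2]; subst.
        assert (Hz : B z) by (inversion Hf2; assumption).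
        assert (Hzx := le_trans _ _ _ _ _ (leB_leS _ _ _ _ (proj1 Hhd2)) Hyx).
        destruct (ltB_ex _ _ _ _ Hhd) as [c [Hc Ey]].
        destruct (classic (leR_in S (allS S) x z)) as [Hxz|Hnxz].
        -- destruct r' as [|w r''].
           ++ exists []. split; [apply chain_one; exact Hx|].
              split; [simpl; lia|]. split.
              ** intros Hmin. exfalso. simpl in Hmin.
                 destruct (ltB_ex _ _ _ _ Hhd2) as [d [Hd Ez]].
                 assert (Hzd : leR_in S (allS S) (mul S z d) z).
                 { apply le_of_ins; [intros; exact I|]. right; exists d; split; [exact I|reflexivity]. }
                 pose proof (Hmin _ (Hm _ _ Hz Hd) Hzd) as Hzzd.
                 pose proof (core S B hB x z c d Hc Hd (le_trans _ _ _ _ _ Hxz Hzzd)) as HH.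
                 try rewrite <- Ey in HH. apply (proj2 Hhd2). exact HH.
              ** intros b Hb Hlt. simpl in Hlt.
                 apply chain_two; auto; exact (lt_le_trans _ _ _ _ _ Hlt Hzx).
           ++ apply Sorted_inv in Hs2 as [Hs3 Hhd3]. apply HdRel_inv in Hhd3.
              inversion Hf2 as [|? ? _ Hf3]; subst.
              assert (Hw : B w) by (inversion Hf3; assumption).
              assert (Hwx := le_trans _ _ _ _ _ (leB_leS _ _ _ _ (proj1 Hhd3)) Hzx).
              destruct (ltB_ex _ _ _ _ Hhd3) as [e [He Ew]].
              destruct (classic (leR_in S (allS S) x w)) as [Hxw|Hnxw].
              ** exfalso. rewrite Ew in Hxw.
                 pose proof (core S B hB x z c e Hc He Hxw) as HH.
                 try rewrite <- Ey in HH. apply (proj2 Hhd2). exact HH.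
              ** destruct (IH (length r'') ltac:(simpl; lia) r'' w eq_refl Hs3 Hf3)
                   as [c' [Hc' [Hlen [Hmin Hb]]]].
                 assert (Hlt : ltR_in S (allS S) w x) by (split; assumption).
                 exists (w::c'). split; [apply chain_cons; assumption|].
                 change (last (_ :: _ :: w :: r'') x) with (last (w::r'') x).
                 rewrite last_cons_ne.
                 split; [simpl in *; lia|]. split.
                 { intro Hmn. pose proof (Hmin Hmn). simpl in *; lia. }
                 { intros b Hb' Hlt'. exact (chain_cons _ _ _ _ _ Hx Hlt (Hb b Hb' Hlt')). }
        -- destruct (IH (length r') ltac:(simpl; lia) r' z eq_refl Hs2 Hf2)
             as [c' [Hc' [Hlen [Hmin Hb]]]].
           assert (Hlt : ltR_in S (allS S) z x) by (split; assumption).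
           exists (z::c'). split; [apply chain_cons; assumption|].
           change (last (y :: z :: r') x) with (last (z::r') x).
           rewrite last_cons_ne.
           split; [simpl in *; lia|]. split.
           { intro Hmn. pose proof (Hmin Hmn). simpl in *; lia. }
           { intros b Hb' Hlt'. exact (chain_cons _ _ _ _ _ Hx Hlt (Hb b Hb' Hlt')). }
    + destruct (IH (length r) ltac:(simpl; lia) r y eq_refl Hs1 Hf1)
        as [c' [Hc' [Hlen [Hmin Hb]]]].
      assert (Hlt : ltR_in S (allS S) y x) by (split; assumption).
      exists (y::c'). split; [apply chain_cons; assumption|].
      rewrite last_cons_ne.
      split; [simpl in *; lia|]. split.
      { intro Hmn. pose proof (Hmin Hmn). simpl in *; lia. }
      { intros b Hb' Hlt'. exact (chain_cons _ _ _ _ _ Hx Hlt (Hb b Hb' Hlt')). }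
Qed.

Theorem theorem3p1 (S : semigroup) (B : S -> Prop) (n : nat)
  (hfin : finite_R_height S)
  (hB : bi_ideal S B)
  (hn_attained : exists l, R_chain S (allS S) B l /\ length l = n)
  (hn_max : forall l, R_chain S (allS S) B l -> length l <= n) :
  R_height_le S B (3 * n - 1).
Proof.
  intros l [Hs Hf]. destruct l as [|x l']; [simpl; lia|].
  destruct (aux S B hB (length l') l' x eq_refl Hs Hf) as [c' [Hc [Hlen [Hmin Hb]]]].
  destruct (classic (exists b, B b /\ ltR_in S (allS S) b (last l' x))) as [[b [Hb1 Hb2]]|Hno].
  - pose proof (hn_max _ (Hb b Hb1 Hb2)) as H. rewrite length_app in H. simpl in *; lia.
  - assert (Hm : minimalB S B (last l' x)).
    { intros b Hb1 Hb2. destruct (classic (leR_in S (allS S) (last l' x) b)) as [H|H]; auto.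
      exfalso; apply Hno; exists b; split; [auto| split; auto]. }
    pose proof (Hmin Hm). pose proof (hn_max _ Hc). simpl in *; lia.
Qed.
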